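(* Suppose a large scale group $G$ acts by uniform coarse equivalences on a large scale space $X$, and the action is proper and cobounded. Then for each $x_0\in X$ the map $G\to X$, $g\mapsto g\cdot x_0$, is a coarse equivalence.
   Context: A large scale space is a set $X$ with a family of covers (uniformly bounded covers) closed under stars $st(\mathcal U,\mathcal V)=\{st(A,\mathcal V):A\in\mathcal U\}$ (where $st(A,\mathcal V)$ is the union of elements of $\mathcal V$ meeting $A$) and under coarsenings-by-refinement (any cover refining a uniformly bounded cover is uniformly bounded); bounded sets are subsets of elements of uniformly bounded covers, and the union of two bounded sets is assumed bounded. A large scale group is a group $G$ with a bornology $\mathcal B$ (a cover closed under subsets and finite unions) closed under inverses and products; its uniformly bounded covers are those refining $\{gB\}_{g\in G}$ for some $B\in\mathcal B$. $G$ acts on $X$ by uniform coarse equivalences if for every uniformly bounded cover $\{U_s\}_{s\in S}$ of $X$ the cover $\{g\cdot U_s\}_{s\in S,g\in G}$ is uniformly bounded. The action is cobounded if $G\cdot B=X$ for some bounded $B\subseteq X$. The action is proper if for every bounded $B\subseteq X$ the set $\{g\in G:(g\cdot B)\cap B\neq\emptyset\}$ is bounded in $G$, and for every bounded $K\subseteq G$ and every $x\in X$ the set $K\cdot x$ is bounded in $X$. A map is a coarse equivalence if it is coarse (preimages of bounded sets bounded) and large scale continuous (images of uniformly bounded covers refine uniformly bounded covers) and has a coarse large scale continuous map in the other direction such that both compositions are close to the identities (maps $f,f'$ into $Y$ are close if $f(x)\in st(f'(x),\mathcal U)$ for all $x$ for some uniformly bounded cover $\mathcal U$ of $Y$). 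*)

(* Defs.v *)
Set Implicit Arguments.

Definition subset {X : Type} (A B : X -> Prop) : Prop := forall x, A x -> B x.
Definition set_eq {X : Type} (A B : X -> Prop) : Prop := forall x, A x <-> B x.
Definition setU {X : Type} (A B : X -> Prop) : X -> Prop := fun x => A x \/ B x.

Definition is_cover {X : Type} (U : (X -> Prop) -> Prop) : Prop :=
  forall x, exists A, U A /\ A x.

Definition refines {X : Type} (U V : (X -> Prop) -> Prop) : Prop :=
  forall A, U A -> exists B, V B /\ subset A B.

Definition st_set {X : Type} (A : X -> Prop) (V : (X -> Prop) -> Prop) : X -> Prop :=
  fun x => exists B, V B /\ (exists y, A y /\ B y) /\ B x.

Definition st_cover {X : Type} (U V : (X -> Prop) -> Prop) : (X -> Prop) -> Prop :=
  fun C => exists A, U A /\ set_eq C (st_set A V).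

Definition bounded {X : Type} (ub : ((X -> Prop) -> Prop) -> Prop) (A : X -> Prop) : Prop :=
  exists U, ub U /\ exists C, U C /\ subset A C.

Definition is_large_scale {X : Type} (ub : ((X -> Prop) -> Prop) -> Prop) : Prop :=
  (forall U, ub U -> is_cover U) /\
  (forall U V, ub U -> ub V -> ub (st_cover U V)) /\
  (forall U V, is_cover U -> refines U V -> ub V -> ub U) /\
  (forall A B, bounded ub A -> bounded ub B -> bounded ub (setU A B)).

Definition img {X Y : Type} (f : X -> Y) (A : X -> Prop) : Y -> Prop :=
  fun y => exists a, A a /\ y = f a.
Definition img_fam {X Y : Type} (f : X -> Y) (U : (X -> Prop) -> Prop) : (Y -> Prop) -> Prop :=
  fun C => exists A, U A /\ set_eq C (img f A).

Definition coarse {X Y : Type} (ubX : ((X -> Prop) -> Prop) -> Prop)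
  (ubY : ((Y -> Prop) -> Prop) -> Prop) (f : X -> Y) : Prop :=
  forall B, bounded ubY B -> bounded ubX (fun x => B (f x)).

Definition ls_continuous {X Y : Type} (ubX : ((X -> Prop) -> Prop) -> Prop)
  (ubY : ((Y -> Prop) -> Prop) -> Prop) (f : X -> Y) : Prop :=
  forall U, ubX U -> exists V, ubY V /\ refines (img_fam f U) V.

Definition close {X Y : Type} (ubY : ((Y -> Prop) -> Prop) -> Prop) (f f' : X -> Y) : Prop :=
  exists U, ubY U /\ forall x, st_set (fun y => y = f' x) U (f x).

Definition coarse_equivalence {X Y : Type} (ubX : ((X -> Prop) -> Prop) -> Prop)
  (ubY : ((Y -> Prop) -> Prop) -> Prop) (f : X -> Y) : Prop :=
  coarse ubX ubY f /\ ls_continuous ubX ubY f /\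
  exists g : Y -> X, coarse ubY ubX g /\ ls_continuous ubY ubX g /\
    close ubX (fun x => g (f x)) (fun x => x) /\
    close ubY (fun y => f (g y)) (fun y => y).

Record Group := {
  gcar :> Type;
  gmul : gcar -> gcar -> gcar;
  gone : gcar;
  ginv : gcar -> gcar;
  gmulA : forall a b c, gmul a (gmul b c) = gmul (gmul a b) c;
  gmul1l : forall a, gmul gone a = a;
  gmul1r : forall a, gmul a gone = a;
  gmulVl : forall a, gmul (ginv a) a = gone;
  gmulVr : forall a, gmul a (ginv a) = gone
}.

Section GroupDefs.
Variable G : Group.

Definition set_inv (B : G -> Prop) : G -> Prop := fun h => exists b, B b /\ h = ginv G b.
Definition set_mul (A B : G -> Prop) : G -> Prop :=
  fun h => exists a b, A a /\ B b /\ h = gmul G a b.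
Definition lcoset (g : G) (B : G -> Prop) : G -> Prop :=
  fun h => exists b, B b /\ h = gmul G g b.

Definition is_group_bornology (Bor : (G -> Prop) -> Prop) : Prop :=
  is_cover Bor /\
  (forall A B, Bor B -> subset A B -> Bor A) /\
  (forall A B, Bor A -> Bor B -> Bor (setU A B)) /\
  (forall B, Bor B -> Bor (set_inv B)) /\
  (forall A B, Bor A -> Bor B -> Bor (set_mul A B)).

Definition group_ub (Bor : (G -> Prop) -> Prop) (U : (G -> Prop) -> Prop) : Prop :=
  is_cover U /\ exists B, Bor B /\
    refines U (fun C => exists g, set_eq C (lcoset g B)).

Variable X : Type.

Definition is_action (act : G -> X -> X) : Prop :=
  (forall x, act (gone G) x = x) /\
  (forall g h x, act (gmul G g h) x = act g (act h x)).

Definition acts_by_uniform_coarse_equivalences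
  (ubX : ((X -> Prop) -> Prop) -> Prop) (act : G -> X -> X) : Prop :=
  forall U, ubX U -> ubX (fun C => exists g A, U A /\ set_eq C (img (act g) A)).

Definition cobounded_action (ubX : ((X -> Prop) -> Prop) -> Prop) (act : G -> X -> X) : Prop :=
  exists B, bounded ubX B /\ forall x, exists g b, B b /\ x = act g b.

Definition proper_action (Bor : (G -> Prop) -> Prop)
  (ubX : ((X -> Prop) -> Prop) -> Prop) (act : G -> X -> X) : Prop :=
  (forall B, bounded ubX B ->
     bounded (group_ub Bor) (fun g => exists x, img (act g) B x /\ B x)) /\
  (forall (K : G -> Prop) (x : X), bounded (group_ub Bor) K ->
     bounded ubX (fun y => exists k, K k /\ y = act k x)).

End GroupDefs.

(* Main.v *)
Require Import Defs.
From Stdlib Require Import Classical ClassicalEpsilon.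

Lemma bsub {X : Type} (ub : ((X -> Prop) -> Prop) -> Prop) (A B : X -> Prop) :
  bounded ub A -> subset B A -> bounded ub B.
Proof.
  intros [U [HU [C [HC HAC]]]] HBA. exists U; split; auto. exists C; split; auto.
  intros x Hx; auto.
Qed.

Lemma single_bor (G : Group) (Bor : (gcar G -> Prop) -> Prop) (g : G) : @is_group_bornology G Bor -> Bor (fun k => k = g).
Proof.
  intros [Hc [Hs _]]. destruct (Hc g) as [D [HD HD1]].
  apply (Hs _ D HD). intros k ->; auto.
Qed.

Lemma coset_ub (G : Group) (Bor : (gcar G -> Prop) -> Prop) (K : G -> Prop) : @is_group_bornology G Bor -> Bor K -> K (gone G) ->
  @group_ub G Bor (fun C => exists g, set_eq C (@lcoset G g K)).
Proof.
  intros HB HK H1. split.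
  - intros x. exists (@lcoset G x K). split. exists x; intro; tauto.
    exists (gone G); split; auto. rewrite gmul1r; auto.
  - exists K; split; auto. intros A HA; exists A; split; auto. intros x; auto.
Qed.

Lemma bor_bounded (G : Group) (Bor : (gcar G -> Prop) -> Prop) (B : G -> Prop) : @is_group_bornology G Bor -> Bor B ->
  bounded (@group_ub G Bor) B.
Proof.
  intros HB HBB. pose (K := setU B (fun k => k = gone G)).
  assert (HK : Bor K). { pose proof HB as [_ [_ [Hu _]]]. apply Hu; auto. apply single_bor; auto. }
  exists (fun C => exists g, set_eq C (@lcoset G g K)). split.
  apply coset_ub; auto. right; auto.
  exists (@lcoset G (gone G) K). split. exists (gone G); intro; tauto.
  intros x Hx. exists x. split. left; auto. rewrite gmul1l; auto.
Qed.

Lemma bounded_bor (G : Group) (Bor : (gcar G -> Prop) -> Prop) (A : G -> Prop) : @is_group_bornology G Bor ->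
  bounded (@group_ub G Bor) A -> Bor A.
Proof.
  intros HBor [U [[_ [B [HB Href]]] [C [HC HAC]]]].
  destruct (Href C HC) as [D [[g Hg] HCD]].
  pose proof HBor as [_ [Hs [_ [_ Hm]]]].
  apply Hs with (@set_mul G (fun k => k = g) B).
  apply Hm; auto. apply single_bor; auto.
  intros a Ha. apply HAC, HCD, Hg in Ha. destruct Ha as [b [Hb ->]].
  exists g, b; auto.
Qed.

Arguments bsub {X ub A B}.
Arguments single_bor {G Bor}.
Arguments coset_ub {G Bor K}.
Arguments bor_bounded {G Bor B}.
Arguments bounded_bor {G Bor A}.

Theorem theorem6p4 (G : Group) (Bor : (gcar G -> Prop) -> Prop) (X : Type)
  (ubX : ((X -> Prop) -> Prop) -> Prop) (act : gcar G -> X -> X) :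
  @is_group_bornology G Bor ->
  is_large_scale ubX ->
  @is_action G X act ->
  @acts_by_uniform_coarse_equivalences G X ubX act ->
  @proper_action G X Bor ubX act ->
  @cobounded_action G X ubX act ->
  forall x0 : X, coarse_equivalence (@group_ub G Bor) ubX (fun g => act g x0).
Proof.
  intros HB HL HA HU HP HC x0.
  destruct HL as [Lcov [Lst [Lref Lun]]]. destruct HP as [P1 P2].
  destruct HC as [B0 [HB0 Hcob]]. destruct HA as [A1 AM].
  assert (Hcan : forall h x, act (ginv G h) (act h x) = x).
  { intros h x. rewrite <- AM, gmulVl, A1; auto. }
  assert (Hsing : forall x, bounded ubX (fun y => y = x)).
  { intros x. destruct HB0 as [W [HW _]]. destruct (Lcov W HW x) as [A [HA Ax]].
    exists W; split; auto; exists A; split; auto; intros y ->; auto. }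
  pose (B1 := setU B0 (fun y => y = x0)).
  assert (HB1 : bounded ubX B1) by (apply Lun; auto).
  pose proof HB0 as [W0 [HW0 [C0 [HC0 HB0C0]]]].
  pose proof HB1 as [W1 [HW1 [C1 [HC1 HB1C1]]]].
  assert (Hstb : forall U V D, ubX U -> ubX V -> U D -> bounded ubX (st_set D V)).
  { intros U V D HUu HVu HD. exists (st_cover U V). split; [apply Lst; auto|].
    exists (st_set D V). split; [exists D; split; auto; intro; tauto | intros x; auto]. }
  assert (Hcf : coarse (@group_ub G Bor) ubX (fun g => act g x0)).
  { intros B HBb. pose (B' := setU B (fun y => y = x0)).
    apply (bsub (A:=fun g => exists x, img (act g) B' x /\ B' x)).
    apply P1. apply Lun; auto.
    intros g Hg. exists (act g x0). split. exists x0; split; [right; auto | auto]. left; auto. }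
  split; [exact Hcf|]. split.
  { intros U [Ucov [B [HBor Href]]].
    destruct (P2 B x0 (bor_bounded HB HBor)) as [W [HW [C [HWC HsubC]]]].
    exists (fun C' => exists g A, W A /\ set_eq C' (img (act g) A)).
    split; [apply HU; auto|].
    intros A' [A [HA Heq]]. destruct (Href A HA) as [D [[g Hg] HAD]].
    exists (img (act g) C). split. exists g, C; split; auto; intro; tauto.
    intros y Hy. apply Heq in Hy. destruct Hy as [a [Ha ->]].
    apply HAD, Hg in Ha. destruct Ha as [b [Hb ->]].
    exists (act b x0). split. apply HsubC. exists b; auto. rewrite AM; auto. }
  pose (psi := fun x => proj1_sig (constructive_indefinite_description _ (Hcob x))).
  assert (Hpsi : forall x, exists b, B0 b /\ x = act (psi x) b).
  { intros x. unfold psi. destruct (constructive_indefinite_description _ (Hcob x)) as [h Hh].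
    simpl. exact Hh. }
  clearbody psi.
  pose (Vact := fun W : (X -> Prop) -> Prop =>
                  fun C => exists g A, W A /\ set_eq C (img (act g) A)).
  exists psi. split; [|split; [|split]].
  -
    intros B HBb. apply bounded_bor in HBb; auto.
    destruct (P2 B x0 (bor_bounded HB HBb)) as [W2 [HW2 [D [HD HsubD]]]].
    apply (bsub (A:=st_set D (Vact W1))).
    apply Hstb with W2; auto. apply HU; auto.
    intros x Hx. destruct (Hpsi x) as [b [Hb Hxb]].
    exists (img (act (psi x)) C1). split. exists (psi x), C1; split; auto; intro; tauto.
    split. exists (act (psi x) x0). split. apply HsubD. exists (psi x); auto.
    exists x0; split; auto. apply HB1C1; right; auto.
    exists b; split; auto. apply HB1C1; left; auto.
  -
    intros U HUu. pose (V1 := Vact U). assert (HV1 : ubX V1) by (apply HU; auto).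
    pose (E := st_set C0 V1). pose (E' := setU E B0).
    assert (HE' : bounded ubX E') by (apply Lun; auto; apply Hstb with W0; auto).
    pose (P := fun g => exists x, img (act g) E' x /\ E' x).
    assert (HPb : Bor P) by (apply (bounded_bor HB); apply P1; auto).
    pose (P' := setU P (fun k => k = gone G)).
    assert (HP' : Bor P').
    { pose proof HB as [_ [_ [Hu _]]]. apply Hu; auto. apply single_bor; auto. }
    exists (fun C => exists g, set_eq C (@lcoset G g P')). split.
    apply coset_ub; auto. right; auto.
    intros A' [A [HA Heq]].
    destruct (classic (exists a, A a)) as [[a Ha] | Hne].
    + destruct (Hpsi a) as [ba [Hba Hab]].
      exists (@lcoset G (psi a) P'). split. exists (psi a); intro; tauto.
      intros y Hy. apply Heq in Hy. destruct Hy as [x [Hx ->]].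
      destruct (Hpsi x) as [bx [Hbx Hxb]].
      exists (gmul G (ginv G (psi a)) (psi x)). split.
      * left. exists (act (gmul G (ginv G (psi a)) (psi x)) bx). split.
        exists bx; split; auto. right; auto.
        left. exists (img (act (ginv G (psi a))) A). split.
        exists (ginv G (psi a)), A; split; auto; intro; tauto.
        split. exists ba. split. apply HB0C0; auto.
        exists a; split; auto. rewrite Hab at 2. rewrite Hcan; auto.
        exists x; split; auto. rewrite AM, <- Hxb; auto.
      * rewrite gmulA, gmulVr, gmul1l; auto.
    + exists (@lcoset G (gone G) P'). split. exists (gone G); intro; tauto.
      intros y Hy. apply Heq in Hy. destruct Hy as [x [Hx _]]. exfalso; eauto.
  -
    pose (K := fun k => exists b, B0 b /\ act k b = x0).
    assert (HK : Bor K).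
    { apply bounded_bor; auto.
      apply (bsub (A:=fun g => exists x, img (act g) B1 x /\ B1 x)). apply P1; auto.
      intros k [b [Hb Hkb]]. exists x0. split. exists b; split; auto. left; auto. right; auto. }
    pose (K' := setU K (fun k => k = gone G)).
    assert (HK' : Bor K').
    { pose proof HB as [_ [_ [Hu _]]]. apply Hu; auto. apply single_bor; auto. }
    exists (fun C => exists g, set_eq C (@lcoset G g K')). split.
    apply coset_ub; auto. right; auto.
    intros g. destruct (Hpsi (act g x0)) as [b [Hb Hgb]].
    exists (@lcoset G g K'). split. exists g; intro; tauto.
    split. exists g. split; auto. exists (gone G); split. right; auto. rewrite gmul1r; auto.
    exists (gmul G (ginv G g) (psi (act g x0))). split.
    left. exists b. split; auto. rewrite AM, <- Hgb, Hcan; auto.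
    rewrite gmulA, gmulVr, gmul1l; auto.
  -
    exists (Vact W1). split. apply HU; auto.
    intros x. destruct (Hpsi x) as [b [Hb Hxb]].
    exists (img (act (psi x)) C1). split. exists (psi x), C1; split; auto; intro; tauto.
    split. exists x. split; auto. exists b; split; auto. apply HB1C1; left; auto.
    exists x0; split; auto. apply HB1C1; right; auto.
Qed.
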